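(* Let $\mathcal{A}=\{\mathbf{A},\mathbf{B},\mathbf{C},\mathbf{D}\}$, let $\mathcal{R}^\dagger$ be the symmetric relation on $\mathcal{A}$ whose related pairs are exactly $\{\mathbf{A},\mathbf{B}\}$, $\{\mathbf{B},\mathbf{D}\}$, $\{\mathbf{D},\mathbf{C}\}$, and let $\mathcal{H}$ be the base graph on $\{1,\dots,n\}$ defined as follows: if $n$ is even, $\mathcal{H}$ has edges $\{\sigma(i),\sigma(i+1)\}$, $i=1,\dots,n$ (indices modulo $n$), for some permutation $\sigma$ of $\{1,\dots,n\}$; if $n$ is odd, for a fixed vertex $u$ and a bijection $\sigma$ from $\{1,\dots,n-1\}$ onto $\{1,\dots,n\}\setminus\{u\}$, $\mathcal{H}$ has edges $\{\sigma(i),\sigma(i+1)\}$, $i=1,\dots,n-1$ (indices modulo $n-1$), and $u$ is isolated. Let $\mu_\pm=\frac{1\pm\sqrt5}{2}$. Then there exist at least $(\sqrt2)^{n-1}$ shapes $S$ such that the preimage $P_S=\{v\in\mathcal{A}^n:\mathcal{H}_{\mathcal{R}^\dagger}(v)=S\}$ satisfies: (I) the subgraph of $Q_4^n$ induced by $P_S$ has a connected component with at least $\mu_+^n+\mu_-^n$ vertices; (II) $P_S$ has diameter $n$, i.e. there exist $v,v'\in P_S$ which differ in all $n$ coordinates.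
   Context: $Q_4^n$ is the graph on $\mathcal{A}^n$ in which two sequences are adjacent iff they differ in exactly one coordinate. For $v=(x_1,\dots,x_n)\in\mathcal{A}^n$, its shape $\mathcal{H}_{\mathcal{R}^\dagger}(v)$ is the graph with vertex set $\{1,\dots,n\}$ and edge set $\{\{i,k\}\in E_{\mathcal{H}}:(x_i,x_k)\in\mathcal{R}^\dagger\}$; a shape is any graph of this form. *)

(* Defs.v *)
From HB Require Import structures.
From mathcomp Require Import all_boot all_order all_algebra.
From mathcomp Require Import fingroup perm.
Set Implicit Arguments. Unset Strict Implicit. Unset Printing Implicit Defensive.
Import Order.TTheory GRing.Theory Num.Theory.

(* Alphabet A = {A,B,C,D} encoded as 'I_4 : A = 0, B = 1, C = 2, D = 3. *)
Definition letter := 'I_4.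

Definition Rdag (x y : letter) : bool :=
  let a := nat_of_ord x in let b := nat_of_ord y in
  [|| (a == 0) && (b == 1), (a == 1) && (b == 0),
      (a == 1) && (b == 3), (a == 3) && (b == 1),
      (a == 3) && (b == 2) | (a == 2) && (b == 3)]%N.

Definition cyc_len (n : nat) : nat := if odd n then n.-1 else n.

(* For n odd, u = sigma (n-1) is the isolated vertex, and sigma restricted to
   {0..n-2} is a bijection onto the complement of u. *)
Definition Hedges (n : nat) (sigma : {perm 'I_n}) : {set {set 'I_n}} :=
  [set e : {set 'I_n} | [exists i : 'I_n, exists j : 'I_n,
     [&& (i < cyc_len n)%N, (nat_of_ord j == (i.+1 %% cyc_len n))%N &
         e == [set sigma i; sigma j]]]].

Definition word n := {ffun 'I_n -> letter}.

Definition shape n (sigma : {perm 'I_n}) (v : word n) : {set {set 'I_n}} :=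
  [set e in Hedges sigma |
     [exists i : 'I_n, exists k : 'I_n, (e == [set i; k]) && Rdag (v i) (v k)]].

Definition is_shape n (sigma : {perm 'I_n}) (S : {set {set 'I_n}}) : bool :=
  [exists v : word n, shape sigma v == S].

Definition shape_preimage n (sigma : {perm 'I_n}) (S : {set {set 'I_n}}) : {set word n} :=
  [set v : word n | shape sigma v == S].

Definition Qadj n (v w : word n) : bool := #|[set i | v i != w i]| == 1%N.

Definition induced n (P : {set word n}) : rel (word n) :=
  fun v w => [&& v \in P, w \in P & Qadj v w].

Definition component n (P : {set word n}) (v : word n) : {set word n} :=
  [set w | connect (induced P) v w].

Definition mu_plus (R : rcfType) : R := (1 + Num.sqrt 5) / 2.
Definition mu_minus (R : rcfType) : R := (1 - Num.sqrt 5) / 2.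

(* Main.v *)
From Pilot Require Import Defs.
From HB Require Import structures.
From mathcomp Require Import all_boot all_order all_algebra.
From mathcomp Require Import fingroup perm.
From mathcomp Require Import zify ring lra.
Import Order.TTheory GRing.Theory Num.Theory.
Import Pilot.Defs.
Set Implicit Arguments. Unset Strict Implicit. Unset Printing Implicit Defensive.

Definition lA : letter := @Ordinal 4 0 isT.
Definition lB : letter := @Ordinal 4 1 isT.
Definition lC : letter := @Ordinal 4 2 isT.
Definition lD : letter := @Ordinal 4 3 isT.

Definition Lt (t b : bool) : letter :=
  if t then (if b then lC else lB) else (if b then lA else lD).
Definition Lp (t : bool) : letter := if t then lD else lC.

Lemma Rdag_sym x y : Rdag x y = Rdag y x.
Proof. by case: x y => [[|[|[|[|x]]]] hx] [[|[|[|[|y]]]] hy]. Qed.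

Lemma Rdag_irr x : Rdag x x = false.
Proof. by case: x => [[|[|[|[|x]]]] hx]. Qed.

Lemma RdagL t1 b1 t2 b2 :
  Rdag (Lt t1 b1) (Lt t2 b2) = (t1 != t2) && ~~ (b1 && b2).
Proof. by case: t1 b1 t2 b2 => [] [] [] []. Qed.

Lemma RdagLp t1 t2 : Rdag (Lp t1) (Lp t2) = (t1 != t2).
Proof. by case: t1 t2 => [] []. Qed.

Lemma Lt_eq t b1 b2 : (Lt t b1 == Lt t b2) = (b1 == b2).
Proof. by case: t b1 b2 => [] [] []. Qed.

Lemma Lt_Lp t : Lt t false != Lp t.
Proof. by case: t. Qed.

Definition mk n (sigma : {perm 'I_n}) (F : nat -> letter) : word n :=
  [ffun y => F (nat_of_ord ((sigma^-1)%g y))].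

Lemma mkE n (sigma : {perm 'I_n}) F (i : 'I_n) : mk sigma F (sigma i) = F i.
Proof. by rewrite ffunE permK. Qed.

Lemma edge_rel n (sigma : {perm 'I_n}) (w : word n) (a b : 'I_n) :
  [exists i, exists k, ([set sigma a; sigma b] == [set i; k]) && Rdag (w i) (w k)]
  = Rdag (w (sigma a)) (w (sigma b)).
Proof.
apply/existsP/idP.
  case=> i /existsP [k /andP [/eqP He Hr]].
  have Hi : i \in [set sigma a; sigma b] by rewrite He set21.
  have Hk : k \in [set sigma a; sigma b] by rewrite He set22.
  move: Hi Hk; rewrite !inE.
  case/orP => /eqP Hi; case/orP => /eqP Hk; move: Hr; rewrite Hi Hk ?Rdag_irr //.
  by rewrite Rdag_sym.
move=> H; exists (sigma a); apply/existsP; exists (sigma b).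
by rewrite eqxx H.
Qed.

Lemma shape_mk n (sigma : {perm 'I_n}) F1 F2 :
  (forall i, (i < cyc_len n)%N -> Rdag (F1 i) (F1 (i.+1 %% cyc_len n))
       = Rdag (F2 i) (F2 (i.+1 %% cyc_len n))) ->
  shape sigma (mk sigma F1) = shape sigma (mk sigma F2).
Proof.
move=> H; apply/setP => e; rewrite !inE; apply: andb_id2l.
move=> /existsP [i /existsP [j /and3P [Hi /eqP Hj /eqP ->]]].
by rewrite !edge_rel !mkE Hj H.
Qed.

Lemma cyc_len_le n : (cyc_len n <= n)%N.
Proof. rewrite /cyc_len; case: odd => //; exact: leq_pred. Qed.

Lemma cyc_lenE n : cyc_len n = (n./2).*2.
Proof.
rewrite /cyc_len; case Ho: (odd n); rewrite -[in LHS](odd_double_half n) Ho //.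
Qed.

Lemma mem_shape_mk n (sigma : {perm 'I_n.+1}) F i :
  (i.+1 < cyc_len n.+1)%N ->
  ([set sigma (inord i); sigma (inord i.+1)] \in shape sigma (mk sigma F))
   = Rdag (F i) (F i.+1).
Proof.
move=> Hi; have Hc := cyc_len_le n.+1.
have Hi1 : (i < n.+1)%N by lia.
have Hi2 : (i.+1 < n.+1)%N by lia.
rewrite inE edge_rel !mkE !inordK //.
suff -> : [set sigma (inord i); sigma (inord i.+1)] \in Hedges sigma by [].
rewrite inE; apply/existsP; exists (inord i); apply/existsP; exists (inord i.+1).
rewrite !inordK // eqxx modn_small // eqxx andbT /=; lia.
Qed.



Fixpoint Tn (gn : nat -> bool) (i : nat) : bool :=
  if i is i'.+1 then (if odd i' then Tn gn i' else Tn gn i' (+) gn i'./2) else false.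

Definition gnat k (g : {ffun 'I_k -> bool}) (l : nat) : bool :=
  [exists o : 'I_k, (nat_of_ord o == l) && g o].

Lemma gnatE k (g : {ffun 'I_k -> bool}) (o : 'I_k) : gnat g o = g o.
Proof.
apply/existsP/idP; last by move=> h; exists o; rewrite eqxx.
by case=> o' /andP [/eqP /val_inj -> ].
Qed.

Lemma Tn_even gn l : Tn gn (l.*2).+1 = Tn gn l.*2 (+) gn l.
Proof. by rewrite /= odd_double doubleK. Qed.

Lemma Tn_odd gn i : odd i -> Tn gn i.+1 = Tn gn i.
Proof. by move=> /= ->. Qed.

Definition Dom k r := ({ffun 'I_k -> 'I_3} * 'I_r.+1)%type.

Definition Bx k r (x : Dom k r) (i : nat) : bool :=
  if (i < k.*2)%N then
    [exists o : 'I_k, (nat_of_ord o == i./2) &&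
        (nat_of_ord (x.1 o) == (if odd i then 2 else 1)%N)]
  else (nat_of_ord x.2 == 1)%N.

Lemma Bx_even k r (x : Dom k r) (o : 'I_k) : Bx x o.*2 = (nat_of_ord (x.1 o) == 1)%N.
Proof.
rewrite /Bx ltn_double ltn_ord odd_double doubleK.
apply/existsP/idP; last by move=> h; exists o; rewrite eqxx.
by case=> o' /andP [/eqP /val_inj -> ].
Qed.

Lemma Bx_odd k r (x : Dom k r) (o : 'I_k) : Bx x o.*2.+1 = (nat_of_ord (x.1 o) == 2)%N.
Proof.
have h : (o.*2.+1 < k.*2)%N by rewrite -!muln2; have := ltn_ord o; lia.
rewrite /Bx h -[o.*2.+1]/(true + o.*2)%N half_bit_double /= odd_double.
apply/existsP/idP; last by move=> h'; exists o; rewrite eqxx.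
by case=> o' /andP [/eqP /val_inj -> ].
Qed.

Definition Vset k r := [set x : Dom k r | Bx x (k.*2).-1 && Bx x 0].

Fixpoint Luc (n : nat) : nat :=
  match n with 0 => 2 | S n' => match n' with 0 => 1 | S n'' => Luc n' + Luc n'' end end.

Lemma LucSS n : Luc n.+2 = Luc n.+1 + Luc n. Proof. by []. Qed.

Lemma Lbound k2 : (Luc (k2.+2.*2) <= 8 * 3^k2 /\ Luc (k2.+2.*2).+1 <= 16 * 3^k2)%N.
Proof.
elim: k2 => [|k IH]; first by [].
rewrite [k.+3.*2]doubleS; move: IH; set x := k.+2.*2 => IH.
rewrite (LucSS x.+1) (LucSS x) expnS; case: IH; lia.
Qed.

Lemma card_Dom k r : #|{: Dom k r}| = (3 ^ k * r.+1)%N.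
Proof. by rewrite card_prod card_ffun !card_ord. Qed.

Lemma card_V k2 r : (#|Vset k2.+2 r| <= 3 ^ k2 * r.+1)%N.
Proof.
pose phi (x : Dom k2.+2 r) : Dom k2 r := ([ffun j : 'I_k2 => x.1 (inord j.+1)], x.2).
rewrite -(card_Dom k2 r); apply: (@leq_card_in _ _ phi).
move=> [f1 i1] [f2 i2]; rewrite !inE => /andP [h1 h2] /andP [h3 h4] [Hf ->].
have e1 : (k2.+2).*2.-1 = (@ord_max k2.+1).*2.+1 by rewrite /= !doubleS.
move: h1 h2 h3 h4; rewrite e1 -[0%N]/((@ord0 k2.+1).*2) !Bx_odd !Bx_even /= => h1 h2 h3 h4.
congr (_, _); apply/ffunP => o.
case: (posnP o) => [o0|opos].
  have -> : o = ord0 by apply: val_inj.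
  by apply: val_inj; move: h2 h4 => /eqP /= -> /eqP ->.
case: (ltnP o k2.+1) => [olt|oge].
  have := congr1 (fun f : {ffun 'I_k2 -> 'I_3} => f (@Ordinal k2 o.-1 ltac:(lia))) Hf.
  rewrite !ffunE /=.
  have -> : (inord (o.-1).+1 : 'I_k2.+2) = o by apply: val_inj; rewrite /= inordK; lia.
  by [].
have -> : o = ord_max by apply: val_inj => /=; have := ltn_ord o; lia.
by apply: val_inj; move: h1 h3 => /eqP /= -> /eqP ->.
Qed.

Lemma card_DomC k r : (r <= 1)%N -> (0 < k.*2 + r)%N ->
  (Luc (k.*2 + r) <= #|~: Vset k r|)%N.
Proof.
move=> hr hpos.
have hC := cardsC (Vset k r); rewrite card_Dom in hC.
case: k hpos hC => [|[|k2]] hpos hC.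
- have -> : r = 1%N by lia.
  apply/card_gt0P.
  exists ([ffun _ => ord0], ord0); rewrite !inE /Bx /=.
  by [].
- have hV0 : Vset 1 r = set0.
    apply/setP => x; rewrite !inE.
    rewrite -[(1.*2).-1]/((@ord0 0).*2.+1) -[0%N]/((@ord0 0).*2) Bx_odd Bx_even.
    by case: eqP => // ->.
  rewrite hV0 cards0 add0n in hC; rewrite hV0 hC.
  by case: r hr {hpos hC hV0} => [|[|]].
- have hV := card_V k2 r; have [h1 h2] := Lbound k2.
  rewrite expnS expnS in hC.
  case: r hr {hpos} hC hV => [|[|]] // _ hC hV; rewrite ?addn0 ?addn1; lia.
Qed.



Lemma Bx_inj k r (x y : Dom k r) : (r <= 1)%N ->
  (forall i, (i < k.*2 + r)%N -> Bx x i = Bx y i) -> x = y.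
Proof.
case: x y => [f1 i1] [f2 i2] hr H.
have hk : forall o : 'I_k, f1 o = f2 o.
  move=> o; have h1 := H o.*2; have h2 := H o.*2.+1.
  rewrite !Bx_even in h1; rewrite !Bx_odd in h2.
  have ho := ltn_ord o.
  have {}h1 := h1 ltac:(rewrite -!muln2; lia).
  have {}h2 := h2 ltac:(rewrite -!muln2; lia).
  apply: val_inj; move: h1 h2 => /=.
  case: (f1 o) => [[|[|[|a]]] ha] /=; case: (f2 o) => [[|[|[|b]]] hb] //=.
congr (_, _); first by apply/ffunP => o; rewrite hk.
clear hk; move: i1 i2 H; case: r hr => [|[|]] // _ i1 i2 H.
  by clear H; apply: val_inj; case: i1 i2 => [[|?] ?] [[|?] ?].
have := H k.*2 ltac:(lia); clear H; rewrite /Bx ltnn /=.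
move=> h; apply: val_inj; move: h.
by case: i1 i2 => [[|[|?]] ?] [[|[|?]] ?].
Qed.

Lemma mk_ext n (sigma : {perm 'I_n}) F1 F2 :
  (forall i, (i < n)%N -> F1 i = F2 i) -> mk sigma F1 = mk sigma F2.
Proof. by move=> H; apply/ffunP => y; rewrite !ffunE H. Qed.

Definition valid n (T Bf : nat -> bool) :=
  forall i, (i < cyc_len n)%N -> T i != T (i.+1 %% cyc_len n) ->
     ~~ (Bf i && Bf (i.+1 %% cyc_len n)).

Lemma shape_valid n (sigma : {perm 'I_n}) T Bf : valid n T Bf ->
  shape sigma (mk sigma (fun i => Lt (T i) (Bf i)))
  = shape sigma (mk sigma (fun i => Lt (T i) false)).
Proof.
move=> H; apply: shape_mk => i hi; rewrite !RdagL /=.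
case: eqP => //= hne; apply: H => //; exact/eqP.
Qed.

Lemma valid_mono n T (Bf Bf' : nat -> bool) : valid n T Bf ->
  (forall i, Bf' i -> Bf i) -> valid n T Bf'.
Proof.
move=> H hm i hi ht; apply/negP => /andP [/hm a /hm b].
by move: (H i hi ht); rewrite a b.
Qed.

Lemma valid_Bx n (gn : nat -> bool) (x : Dom (n./2) (odd n)) :
  x \in ~: Vset (n./2) (odd n) -> valid n (Tn gn) (Bx x).
Proof.
rewrite !inE => hx; rewrite /valid cyc_lenE => i hi.
case: (ltnP i.+1 (n./2).*2) => hi1.
  rewrite modn_small //.
  case ho: (odd i); first by rewrite Tn_odd // eqxx.
  move=> _.
  have ei : i = (i./2).*2 by have := odd_double_half i; rewrite ho add0n.
  have hlt : (i./2 < n./2)%N by move: hi; rewrite {1}ei ltn_double.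
  rewrite ei -[(i./2).*2]/(nat_of_ord (Ordinal hlt)).*2 Bx_even Bx_odd.
  by case: eqP => // ->.
have ei : i.+1 = (n./2).*2 by lia.
rewrite ei modnn => _.
have -> : i = ((n./2).*2).-1 by rewrite -ei.
by [].
Qed.

Lemma comp_valid n (sigma : {perm 'I_n.+1}) T Bf : valid n.+1 T Bf ->
  mk sigma (fun i => Lt (T i) (Bf i)) \in
   component (shape_preimage sigma (shape sigma (mk sigma (fun i => Lt (T i) false))))
             (mk sigma (fun i => Lt (T i) false)).
Proof.
move=> hv.
set b := mk sigma (fun i => Lt (T i) false).
set P := shape_preimage _ _.
have Hin : forall Bf' : nat -> bool, (forall i, Bf' i -> Bf i) -> mk sigma (fun i => Lt (T i) (Bf' i)) \in P.
  move=> Bf' hm; rewrite inE shape_valid //; exact: valid_mono hv hm.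
suff H : forall j, connect (induced P) b (mk sigma (fun i => Lt (T i) (Bf i && (i < j)%N))).
  rewrite inE (_ : mk sigma (fun i => Lt (T i) (Bf i)) = mk sigma (fun i => Lt (T i) (Bf i && (i < n.+1)%N))).
    exact: H.
  by apply: mk_ext => i hi; rewrite hi andbT.
elim => [|j IH].
  have -> : mk sigma (fun i => Lt (T i) (Bf i && (i < 0)%N)) = b.
    by apply: mk_ext => i _; rewrite andbF.
  exact: connect0.
case hj: (Bf j && (j < n.+1)%N).
  move/andP: hj => [hB hjn].
  apply: (connect_trans IH); apply: connect1.
  rewrite /induced !Hin; first last.
  - by move=> i /andP [].
  - by move=> i /andP [].
  rewrite /= /Qadj; apply/eqP.
  have -> : [set y | mk sigma (fun i => Lt (T i) (Bf i && (i < j)%N)) y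
                    != mk sigma (fun i => Lt (T i) (Bf i && (i < j.+1)%N)) y]
            = [set sigma (inord j)].
    apply/setP => y; rewrite !inE.
    have [z ->] : exists z, y = sigma z by exists ((sigma^-1)%g y); rewrite permKV.
    rewrite !mkE Lt_eq (inj_eq (@perm_inj _ sigma)) -val_eqE /= inordK //.
    case: (ltngtP (nat_of_ord z) j) => h.
    - by rewrite ltnS ltnW // eqxx.
    - by rewrite ltnS leqNgt h andbF.
    - by rewrite h hB ltnSn.
  by rewrite cards1.
have -> : mk sigma (fun i => Lt (T i) (Bf i && (i < j.+1)%N))
        = mk sigma (fun i => Lt (T i) (Bf i && (i < j)%N)).
  apply: mk_ext => i hi; congr Lt.
  case: (ltngtP i j) => h.
  - by rewrite ltnS ltnW.
  - by rewrite ltnS leqNgt h.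
  - by move: hj; rewrite -h hi andbT => ->; rewrite !andFb.
exact: IH.
Qed.


Local Open Scope ring_scope.

Lemma mu_sq (R : rcfType) (s : R) : s ^+ 2 = 5 ->
  ((1 + s) / 2) ^+ 2 = (1 + s) / 2 + 1 /\ ((1 - s) / 2) ^+ 2 = (1 - s) / 2 + 1.
Proof.
move=> h5; split.
  have -> : ((1 + s) / 2) ^+ 2 = (1 + 2 * s + s ^+ 2) / 4 by field.
  by rewrite h5; field.
have -> : ((1 - s) / 2) ^+ 2 = (1 - 2 * s + s ^+ 2) / 4 by field.
by rewrite h5; field.
Qed.

Lemma rec2 (R : rcfType) (x : R) n : x ^+ 2 = x + 1 -> x ^+ n.+2 = x ^+ n.+1 + x ^+ n.
Proof. by move=> h; rewrite -addn2 exprD h mulrDr mulr1 exprSr. Qed.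

Lemma mu_luc (R : rcfType) n : mu_plus R ^+ n + mu_minus R ^+ n = (Luc n)%:R.
Proof.
have [hp hm] := mu_sq (sqr_sqrtr (ler0n R 5)).
suff : forall n, (mu_plus R ^+ n + mu_minus R ^+ n = (Luc n)%:R /\
   mu_plus R ^+ n.+1 + mu_minus R ^+ n.+1 = (Luc n.+1)%:R) by move=> /(_ n) [].
elim => [|m [IH1 IH2]].
  rewrite /mu_plus /mu_minus !expr0 !expr1 /=; split; first by [].
  lra.
split => //.
by rewrite (rec2 _ hp) (rec2 _ hm) LucSS natrD -IH1 -IH2; ring.
Qed.

Lemma neq_xor (t b : bool) : (t != t (+) b) = b.
Proof. by case: t b => [] []. Qed.

Theorem theorem2 (R : rcfType) (n : nat) (sigma : {perm 'I_n}) :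
  (0 < n)%N ->
  exists Ss : {set {set {set 'I_n}}},
    (Num.sqrt (2 : R)) ^+ n.-1 <= (#|Ss|%:R : R) /\
    forall S, S \in Ss ->
      [/\ is_shape sigma S,
          (exists v, v \in shape_preimage sigma S /\
             (mu_plus R) ^+ n + (mu_minus R) ^+ n
               <= (#|component (shape_preimage sigma S) v|%:R : R))
        & (exists v v', [/\ v \in shape_preimage sigma S, v' \in shape_preimage sigma S &
             forall i, v i != v' i])].
Proof.
case: n sigma => [//|n] sigma _.
have hm : cyc_len n.+1 = ((n.+1)./2).*2 := cyc_lenE n.+1.
have hkr : (((n.+1)./2).*2 + odd n.+1 = n.+1)%N by rewrite addnC odd_double_half.
pose T (g : {ffun 'I_(n.+1)./2 -> bool}) := Tn (gnat g).
pose base g := mk sigma (fun i => Lt (T g i) false).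
have key : forall g (o : 'I_(n.+1)./2),
    ([set sigma (inord o.*2); sigma (inord o.*2.+1)] \in shape sigma (base g)) = g o.
  move=> g o; rewrite mem_shape_mk; last by rewrite hm -!muln2; have := ltn_ord o; lia.
  by rewrite RdagL /T Tn_even gnatE neq_xor andbT.
exists [set shape sigma (base g) | g : {ffun 'I_(n.+1)./2 -> bool}].
split.
  rewrite card_imset; last first.
    move=> g1 g2 E; apply/ffunP => o; by rewrite -!key E.
  rewrite card_ffun card_bool card_ord /=.
  have h1 : 1 <= Num.sqrt (2 : R).
  by rewrite -{1}sqrtr1 ler_sqrt // ler1n.
  have hle : (n <= (uphalf n).*2)%N.
    have := odd_double_half n.+1 => /=; case: odd => /= h; rewrite -!muln2 in h *; lia.
  apply: le_trans (ler_weXn2l h1 hle) _.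
  by rewrite -mul2n exprM sqr_sqrtr ?ler0n // natrX.
move=> S /imsetP [g _ ->]; split.
- by apply/existsP; exists (base g).
- exists (base g); split; first by rewrite inE.
  rewrite mu_luc ler_nat -{1}hkr.
  apply: leq_trans (card_DomC _ _) _; first by case: odd.
    by rewrite hkr.
  pose wx (x : Dom (n.+1)./2 (odd n.+1)) := mk sigma (fun i => Lt (T g i) (Bx x i)).
  rewrite -(card_imset _ (f := wx)); last first.
    move=> x y E; apply: Bx_inj; first by case: odd.
    move=> i; rewrite hkr => hi.
    have := congr1 (fun w : word n.+1 => w (sigma (inord i))) E.
    by rewrite /wx !mkE inordK // => /eqP; rewrite Lt_eq => /eqP.
  apply: subset_leq_card; apply/subsetP => w /imsetP [x hx ->].
  apply: comp_valid; exact: valid_Bx.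
- exists (base g), (mk sigma (fun i => Lp (T g i))); split.
  + by rewrite inE.
  + rewrite inE; apply/eqP; apply: shape_mk => i _.
    by rewrite RdagL RdagLp andbT.
  + move=> y; have [z ->] : exists z, y = sigma z by exists ((sigma^-1)%g y); rewrite permKV.
    by rewrite !mkE Lt_Lp.
Qed.
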